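(* Let $l\ge-\tfrac12$. There exist constants $C_1,\dots,C_6$ depending only on $l$ such that for all $0<\eta<\xi$: $$V_1(z;\xi,\eta)\le C_1\frac{(z-\eta)^l\xi^l}{z^{2l}},\quad z\in\left(\tfrac{2\xi\eta}{\xi+\eta},\xi\right);$$ $$V_1(z;\xi,\eta)\le C_2\frac{(\xi-z)^l\eta^l}{z^{2l}}\left(\log\frac{(\xi-z)\eta}{(z-\eta)\xi}+C_3\right),\quad z\in\left(\eta,\tfrac{2\xi\eta}{\xi+\eta}\right);$$ $$V_2(z;\xi,\eta)\le C_4\frac{(\xi-\eta)^{1+2l}z}{\xi^{1+l}(\eta-z)^{1+l}},\quad z\in\left(0,\tfrac{\xi\eta}{2\xi-\eta}\right);$$ $$V_2(z;\xi,\eta)\le C_5\frac{(\xi-\eta)^l}{z^l}\left(\log\frac{z(\xi-\eta)}{\xi(\eta-z)}+C_6\right),\quad z\in\left(\tfrac{\xi\eta}{2\xi-\eta},\eta\right).$$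
   Context: Let ${}_2F_1$ denote the Gauss hypergeometric function (analytically continued to $(-\infty,0)$). For $0<\eta<z<\xi$ put $\sigma_1=\frac{(z-\xi)\eta}{(z-\eta)\xi}\in(-\infty,0)$ and $$V_1(z;\xi,\eta)=\frac{(z-\eta)^l\xi^l}{z^{2l}}\left|{}_2F_1(-l,-l;1;\sigma_1)\right|.$$ For $0<z<\eta<\xi$ put $\sigma_2=-\frac{z(\xi-\eta)}{\xi(\eta-z)}\in(-\infty,0)$ and $$V_2(z;\xi,\eta)=\frac{|\sin(\pi l)|\,\Gamma^2(1+l)}{\pi\,\Gamma(2+2l)}\frac{(\xi-\eta)^{1+2l}z}{\xi^{l+1}(\eta-z)^{l+1}}\left|{}_2F_1(1+l,1+l;2+2l;\sigma_2)\right|.$$ (These are the moduli $|v_1(z,0;\xi,\eta)|$, $|v_2(z,0;\xi,\eta)|$ of the two branches of the Riemann function of the relevant Goursat problem.) *)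

(* Defs.v *)
From Stdlib Require Import Reals Factorial ClassicalEpsilon.
Open Scope R_scope.

(* Limit of a real sequence (chosen via classical epsilon; meaningful when the
   sequence converges, i.e. when some l satisfies Un_cv u l). *)
Definition lim_seq (u : nat -> R) : R :=
  epsilon (inhabits 0) (fun l => Un_cv u l).

Fixpoint poch (a : R) (n : nat) : R :=
  match n with
  | O => 1
  | S k => poch a k * (a + INR k)
  end.

Definition hyp_series (a b c x : R) : R :=
  lim_seq (fun N => sum_f_R0
     (fun n => poch a n * poch b n / (poch c n * INR (fact n)) * x ^ n) N).

(* Gauss hypergeometric function 2F1(a,b;c;x) for x < 1: the series for
   |x| < 1, and for x <= -1 its analytic continuation, given by the Pfaff
   transformation 2F1(a,b;c;x) = (1-x)^(-a) 2F1(a,c-b;c;x/(x-1)),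
   where x/(x-1) lies in [1/2,1). *)
Definition hyp2F1 (a b c x : R) : R :=
  if Rle_dec x (-1)
  then Rpower (1 - x) (- a) * hyp_series a (c - b) c (x / (x - 1))
  else hyp_series a b c x.

(* Euler's Gamma function on (0, +oo), via the Gauss limit formula
   Gamma(x) = lim_n n! n^x / (x (x+1) ... (x+n)). *)
Definition Gamma (x : R) : R :=
  lim_seq (fun n => INR (fact n) * Rpower (INR n) x / poch x (S n)).

Definition sigma1 (z xi eta : R) : R := ((z - xi) * eta) / ((z - eta) * xi).

Definition V1 (l z xi eta : R) : R :=
  Rpower (z - eta) l * Rpower xi l / Rpower z (2 * l)
  * Rabs (hyp2F1 (- l) (- l) 1 (sigma1 z xi eta)).

Definition sigma2 (z xi eta : R) : R := - (z * (xi - eta)) / (xi * (eta - z)).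

Definition V2 (l z xi eta : R) : R :=
  Rabs (sin (PI * l)) * (Gamma (1 + l)) ^ 2 / (PI * Gamma (2 + 2 * l))
  * (Rpower (xi - eta) (1 + 2 * l) * z
     / (Rpower xi (l + 1) * Rpower (eta - z) (l + 1)))
  * Rabs (hyp2F1 (1 + l) (1 + l) (2 + 2 * l) (sigma2 z xi eta)).

(* Main.v *)
Require Import Defs.
From Stdlib Require Import Reals ClassicalEpsilon Lra Lia Psatz Arith.
From Coquelicot Require Import Coquelicot.
Open Scope R_scope.

Lemma conv (a : nat -> R) K x : (forall n, Rabs (a n) <= K) -> Rabs x < 1 ->
  exists L, Un_cv (fun N => sum_f_R0 (fun n => a n * x^n) N) L.
Proof.
  intros Ha Hx.
  assert (E : ex_series (fun n => a n * x^n)).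
  { apply (@ex_series_le R_AbsRing R_CompleteNormedModule _ (fun n => K * Rabs x ^ n)).
    - intros n. change norm with Rabs. simpl. rewrite Rabs_mult, <- RPow_abs.
      apply Rmult_le_compat_r. apply pow_le, Rabs_pos. apply Ha.
    - apply (@ex_series_scal_l R_AbsRing R_NormedModule K (fun n => Rabs x ^ n)). apply ex_series_geom. rewrite Rabs_Rabsolu; auto. }
  destruct E as [L HL]. exists L. apply is_lim_seq_Reals.
  eapply is_lim_seq_ext. intros; apply sum_n_Reals. exact HL.
Qed.

Lemma lim_bound (u : nat -> R) M : (exists L, Un_cv u L) -> (forall N, Rabs (u N) <= M) ->
  Rabs (lim_seq u) <= M.
Proof.
  intros Hex HM. unfold lim_seq.
  pose proof (epsilon_spec (inhabits 0) (fun l => Un_cv u l) Hex) as HL.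
  set (L := epsilon (inhabits 0) (fun l => Un_cv u l)) in *.
  destruct (Rle_lt_dec (Rabs L) M) as [h|h]; auto.
  exfalso. destruct (HL (Rabs L - M)) as [N HN]; [lra|].
  specialize (HN N (le_n N)). unfold Rdist in HN.
  pose proof (Rabs_triang_inv L (u N)). rewrite Rabs_minus_sym in HN.
  specialize (HM N). lra.
Qed.

Lemma exp_le x y : x <= y -> exp x <= exp y.
Proof. intros [h|h]. left; apply exp_increasing; auto. subst; lra. Qed.

Lemma ln_le_xm1 x : 0 < x -> ln x <= x - 1.
Proof.
  intros hx. rewrite <- (ln_exp (x-1)). apply ln_le; auto.
  pose proof (exp_ineq1_le (x-1)). lra.
Qed.

Lemma alt_bound : forall N (d : nat -> R), (forall n, 0 <= d n) -> (forall n, d (S n) <= d n) ->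
  0 <= sum_f_R0 (fun i => (-1)^i * d i) N <= d 0%nat.
Proof.
  induction N; intros d H0 H1.
  - simpl. specialize (H0 0%nat). lra.
  - rewrite decomp_sum by lia. simpl Init.Nat.pred.
    assert (E : sum_f_R0 (fun i => (-1)^(S i) * d (S i)) N = -1 * sum_f_R0 (fun i => (-1)^i * d (S i)) N).
    { rewrite scal_sum. apply sum_eq. intros; simpl; ring. }
    rewrite E. destruct (IHN (fun i => d (S i))) as [a b]; auto.
    specialize (H1 0%nat). simpl pow. lra.
Qed.

Lemma single_le_sum (c : nat -> R) n N : (forall k, 0 <= c k) -> (n <= N)%nat -> c n <= sum_f_R0 c N.
Proof.
  intros Hc. induction N; intros h.
  - assert (n = 0%nat) by lia. subst. simpl; lra.
  - simpl. destruct (Nat.eq_dec n (S N)). subst.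
    + assert (0 <= sum_f_R0 c N) by (apply cond_pos_sum; auto). lra.
    + specialize (IHN ltac:(lia)). specialize (Hc (S N)). lra.
Qed.

Lemma sum_mono (c : nat -> R) N M : (forall k, 0 <= c k) -> (N <= M)%nat -> sum_f_R0 c N <= sum_f_R0 c M.
Proof.
  intros Hc h. induction h. lra. simpl. specialize (Hc (S m)). lra.
Qed.

Lemma pow_le1 x n : 0 <= x <= 1 -> x ^ n <= 1.
Proof. intros h. induction n; simpl. lra. pose proof (pow_le x n ltac:(lra)). nra. Qed.

Lemma reg13 (c : nat -> R) (N0 : nat) : (forall n, 0 <= c n) ->
  (forall n, (N0 <= n)%nat -> c (S n) <= c n) ->
  exists B, 0 <= B /\ (forall n, Rabs (c n) <= B) /\
   (forall x, -1 < x <= 0 -> forall N, Rabs (sum_f_R0 (fun n => c n * x^n) N) <= B).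
Proof.
  intros Hc Hd.
  set (S0 := sum_f_R0 c N0).
  assert (HS0 : 0 <= S0) by (apply cond_pos_sum; auto).
  assert (Hdec : forall k, c (N0 + k)%nat <= c N0).
  { induction k. rewrite Nat.add_0_r; lra.
    replace (N0 + S k)%nat with (S (N0 + k)) by lia.
    pose proof (Hd (N0+k)%nat ltac:(lia)). lra. }
  assert (HcN0 : c N0 <= S0) by (apply single_le_sum; auto).
  exists (2 * S0). split; [lra|split].
  - intros n. rewrite Rabs_pos_eq by auto.
    destruct (le_lt_dec n N0).
    + pose proof (single_le_sum c n N0 Hc l). fold S0 in H. lra.
    + replace n with (N0 + (n - N0))%nat by lia. pose proof (Hdec (n-N0)%nat). lra.
  - intros x Hx N.
    assert (Hx1 : 0 <= Rabs x <= 1) by (split; [apply Rabs_pos| unfold Rabs; destruct Rcase_abs; lra]).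
    assert (Hsmall : forall M, (M <= N0)%nat -> Rabs (sum_f_R0 (fun n => c n * x^n) M) <= S0).
    { intros M hM. eapply Rle_trans. apply sum_f_R0_triangle.
      eapply Rle_trans. 2: apply (sum_mono c M N0 Hc hM).
      apply sum_Rle. intros k _. rewrite Rabs_mult, (Rabs_pos_eq (c k)) by auto.
      rewrite <- RPow_abs. pose proof (pow_le (Rabs x) k (Rabs_pos x)).
      pose proof (pow_le1 (Rabs x) k Hx1). specialize (Hc k). nra. }
    destruct (le_lt_dec N N0) as [h|h].
    + pose proof (Hsmall N h). lra.
    + rewrite (tech2 _ N0 N h).
      set (d := fun i => c (S N0 + i)%nat * (-x)^i).
      assert (E : sum_f_R0 (fun i => c (S N0 + i)%nat * x ^ (S N0 + i)) (N - S N0)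
                 = x ^ (S N0) * sum_f_R0 (fun i => (-1)^i * d i) (N - S N0)).
      { rewrite scal_sum. apply sum_eq. intros i _. unfold d.
        rewrite pow_add. replace x with (-1 * - x) at 2 by ring. rewrite Rpow_mult_distr. ring. }
      rewrite E.
      destruct (alt_bound (N - S N0) d) as [a b].
      * intros i. unfold d. apply Rmult_le_pos; auto. apply pow_le; lra.
      * intros i. unfold d. replace (S N0 + S i)%nat with (S (S N0 + i)) by lia.
        simpl pow. pose proof (Hd (S N0 + i)%nat ltac:(lia)).
        pose proof (pow_le (-x) i ltac:(lra)). pose proof (Hc (S (S N0 + i))).
        apply Rmult_le_compat; nra.
      * assert (Hd0 : d 0%nat = c (S N0)) by (unfold d; simpl; rewrite Nat.add_0_r; ring).
        pose proof (Hd N0 (le_n _)).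
        pose proof (Hsmall N0 (le_n _)).
        eapply Rle_trans. apply Rabs_triang. rewrite Rabs_mult, <- RPow_abs.
        pose proof (pow_le1 (Rabs x) (S N0) Hx1). pose proof (pow_le (Rabs x) (S N0) (Rabs_pos x)).
        rewrite (Rabs_pos_eq (sum_f_R0 (fun i => _ * d i) _)) by lra. nra.
Qed.

Lemma harm m : sum_f_R0 (fun n => 1 / INR (S n)) m <= 1 + ln (INR (S m)).
Proof.
  induction m.
  - simpl. rewrite ln_1. lra.
  - rewrite tech5. rewrite !S_INR in *.
    pose proof (pos_INR m).
    pose proof (ln_le_xm1 ((INR m + 1)/(INR m + 1 + 1)) ltac:(apply Rdiv_lt_0_compat; lra)).
    unfold Rdiv in H0. rewrite ln_mult in H0; [|lra|apply Rinv_0_lt_compat; lra]. rewrite ln_Rinv in H0 by lra.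
    assert ((INR m + 1) * / (INR m + 1 + 1) - 1 = - (1 / (INR m + 1 + 1))) by (field; lra).
    lra.
Qed.

Lemma logsum w : 0 <= w < 1 -> forall N,
  sum_f_R0 (fun n => w^(S n) / INR (S n)) N <= 2 + ln (1/(1-w)).
Proof.
  intros Hw N. set (y := 1/(1-w)).
  assert (Hy : 1 <= y). { unfold y. apply (Rmult_le_reg_r (1-w)); [lra|]. field_simplify; lra. }
  destruct (nfloor_ex (y-1) ltac:(lra)) as [m Hm].
  assert (Hterm : forall n, w^(S n)/INR (S n) <= 1 / INR (S n)).
  { intros n. unfold Rdiv. apply Rmult_le_compat_r.
    left; apply Rinv_0_lt_compat, lt_0_INR; lia. apply pow_le1; lra. }
  assert (Hsmall : forall M, (M <= m)%nat -> sum_f_R0 (fun n => w^(S n) / INR (S n)) M <= 1 + ln y).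
  { intros M hM. eapply Rle_trans. apply sum_Rle. intros n _. apply Hterm.
    eapply Rle_trans. apply harm. apply Rplus_le_compat_l. apply ln_le.
    apply lt_0_INR; lia. rewrite S_INR. apply le_INR in hM. lra. }
  destruct (le_lt_dec N m) as [h|h].
  - pose proof (Hsmall N h). lra.
  - rewrite (tech2 _ m N h). pose proof (Hsmall m (le_n _)).
    assert (sum_f_R0 (fun i => w ^ S (S m + i) / INR (S (S m + i))) (N - S m) <= 1); [|lra].
    eapply Rle_trans. apply sum_Rle. intros i _.
    instantiate (1 := fun i => w ^ i * / (INR m + 2)). unfold Rdiv.
    apply Rmult_le_compat.
    + apply pow_le; lra.
    + left; apply Rinv_0_lt_compat, lt_0_INR; lia.
    + replace (S (S m + i)) with (i + S (S m))%nat by lia. rewrite pow_add.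
      pose proof (pow_le1 w (S (S m)) ltac:(lra)). pose proof (pow_le w i ltac:(lra)).
      pose proof (pow_le w (S (S m)) ltac:(lra)). nra.
    + apply Rinv_le_contravar. pose proof (pos_INR m); lra.
      replace (INR m + 2) with (INR (S (S m))) by (rewrite !S_INR; ring). apply le_INR; lia.
    + rewrite <- scal_sum. rewrite tech3 by lra.
      pose proof (pow_le w (S (N - S m)) ltac:(lra)).
      assert ((1 - w ^ S (N - S m)) / (1 - w) <= y).
      { unfold y. unfold Rdiv. apply Rmult_le_compat_r. left; apply Rinv_0_lt_compat; lra. lra. }
      pose proof (pos_INR m).
      apply (Rle_trans _ (/ (INR m + 2) * (INR m + 2))).
      apply Rmult_le_compat_l; [left; apply Rinv_0_lt_compat; lra | lra].
      right; field; lra.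
Qed.

Lemma reg24 (c : nat -> R) A B : c 0%nat = 1 -> 0 <= A -> 0 <= B -> Rabs (c 1%nat) <= A ->
  (forall k, (1 <= k)%nat -> Rabs (c (S k)) <= Rabs (c k) * (INR k / (INR k + 1) * (1 + B / (INR k * (INR k + 1))))) ->
  exists K, 0 <= K /\ (forall n, Rabs (c n) <= 1 + K) /\
   (forall w, 0 <= w < 1 -> forall N, Rabs (sum_f_R0 (fun n => c n * w^n) N) <= 1 + K * (2 + ln (1/(1-w)))).
Proof.
  intros H0 HA HB H1 Hr.
  assert (Hst : forall n, Rabs (c (S n)) <= A * exp (B * (1 - 1/(INR n + 1))) / (INR n + 1)).
  { induction n.
    - simpl. replace (B * (1 - 1/(0+1))) with 0 by field. rewrite exp_0. lra.
    - pose proof (Hr (S n) ltac:(lia)). rewrite S_INR in *. pose proof (pos_INR n).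
      set (k := INR n) in *.
      assert (Hx : 1 + B / ((k+1)*(k+1+1)) <= exp (B / ((k+1)*(k+1+1)))) by apply exp_ineq1_le.
      assert (E : exp (B * (1 - 1/(k+1+1))) = exp (B * (1 - 1/(k+1))) * exp (B / ((k+1)*(k+1+1)))).
      { rewrite <- exp_plus. f_equal. field. lra. }
      rewrite E.
      assert (0 <= B / ((k+1)*(k+1+1))) by (apply Rmult_le_pos; [lra| left; apply Rinv_0_lt_compat; nra]).
      assert (0 < (k+1)/(k+1+1)) by (apply Rdiv_lt_0_compat; lra).
      eapply Rle_trans. apply H.
      eapply Rle_trans. apply Rmult_le_compat_r. 2: apply IHn. nra.
      pose proof (exp_pos (B * (1 - 1 / (k + 1)))).
      pose proof (exp_pos (B / ((k + 1) * (k + 1 + 1)))).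
      replace (A * exp (B * (1 - 1 / (k + 1))) / (k + 1) * ((k + 1) / (k + 1 + 1) * (1 + B / ((k + 1) * (k + 1 + 1)))))
        with (A * exp (B * (1 - 1 / (k + 1))) / (k + 1 + 1) * (1 + B / ((k + 1) * (k + 1 + 1)))) by (field; lra).
      replace (A * (exp (B * (1 - 1 / (k + 1))) * exp (B / ((k + 1) * (k + 1 + 1)))) / (k + 1 + 1))
        with (A * exp (B * (1 - 1 / (k + 1))) / (k + 1 + 1) * exp (B / ((k + 1) * (k + 1 + 1)))) by (field; lra).
      apply Rmult_le_compat_l; auto.
      apply Rmult_le_pos. nra. left; apply Rinv_0_lt_compat; lra. }
  set (K := A * exp B).
  assert (HK : 0 <= K) by (unfold K; pose proof (exp_pos B); nra).
  assert (Hb : forall n, Rabs (c (S n)) <= K / (INR n + 1)).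
  { intros n. eapply Rle_trans. apply Hst. pose proof (pos_INR n). unfold Rdiv.
    apply Rmult_le_compat_r. left; apply Rinv_0_lt_compat; lra.
    apply Rmult_le_compat_l; auto. apply exp_le.
    assert (0 <= 1/(INR n + 1)) by (unfold Rdiv; rewrite Rmult_1_l; left; apply Rinv_0_lt_compat; lra). nra. }
  exists K. split; auto. split.
  - intros [|n]. rewrite H0, Rabs_R1; lra.
    eapply Rle_trans. apply Hb. pose proof (pos_INR n).
    assert (K / (INR n + 1) <= K). { unfold Rdiv. pose proof (Rinv_le_contravar 1 (INR n + 1) ltac:(lra) ltac:(lra)). rewrite Rinv_1 in H2. nra. }
    lra.
  - intros w Hw N.
    assert (Hl : 0 <= ln (1/(1-w))). { rewrite <- ln_1. apply ln_le. lra. apply (Rmult_le_reg_r (1-w)); [lra|]. field_simplify; lra. }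
    destruct N as [|N].
    + simpl. rewrite H0, Rmult_1_l, Rabs_R1. nra.
    + rewrite decomp_sum by lia. simpl Init.Nat.pred. rewrite H0. simpl pow. rewrite Rmult_1_l.
      eapply Rle_trans. apply Rabs_triang. rewrite Rabs_R1. apply Rplus_le_compat_l.
      eapply Rle_trans. apply sum_f_R0_triangle.
      eapply Rle_trans. apply sum_Rle. intros n _.
      instantiate (1 := fun n => (w ^ S n / INR (S n)) * K).
      cbv beta. change (w * w ^ n) with (w ^ S n). rewrite Rabs_mult, (Rabs_pos_eq (w ^ S n)) by (apply pow_le; lra).
      pose proof (Hb n). pose proof (pow_le w (S n) ltac:(lra)).
      rewrite S_INR. replace (w ^ S n / (INR n + 1) * K) with (K / (INR n + 1) * w ^ S n) by (field; pose proof (pos_INR n); lra).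
      apply Rmult_le_compat_r; auto.
      rewrite <- scal_sum. apply Rmult_le_compat_l; auto. apply logsum; auto.
Qed.

Definition cf a b c n := poch a n * poch b n / (poch c n * INR (fact n)).

Lemma poch_pos c n : 0 < c -> 0 < poch c n.
Proof. intros h. induction n; simpl. lra. pose proof (pos_INR n). nra. Qed.

Lemma cf0 a b c : cf a b c 0 = 1.
Proof. unfold cf; simpl; field. Qed.

Lemma cfS a b c n : 0 < c -> cf a b c (S n) = cf a b c n * ((a + INR n) * (b + INR n) / ((c + INR n) * (INR n + 1))).
Proof.
  intros h. unfold cf. simpl poch. rewrite fact_simpl, mult_INR, S_INR.
  pose proof (poch_pos c n h). pose proof (INR_fact_neq_0 n). pose proof (pos_INR n).
  field. repeat split; lra.
Qed.

Lemma divle p b q d : 0 < b -> 0 < d -> p * d <= q * b -> p / b <= q / d.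
Proof.
  intros hb hd h. replace (p/b) with ((p*d) * /(b*d)) by (field; lra).
  replace (q/d) with ((q*b) * /(b*d)) by (field; lra).
  apply Rmult_le_compat_r; auto. left; apply Rinv_0_lt_compat; nra.
Qed.

Lemma divnn p b : 0 < b -> 0 <= p -> 0 <= p / b.
Proof. intros; apply Rmult_le_pos; auto. left; apply Rinv_0_lt_compat; auto. Qed.

Lemma exN (y : R) : exists N : nat, y <= INR N.
Proof.
  destruct (nfloor_ex (Rabs y) (Rabs_pos y)) as [m Hm]. exists (S m). rewrite S_INR.
  pose proof (Rle_abs y). lra.
Qed.

Lemma coef1 l : -1/2 <= l -> exists B, 0 <= B /\ (forall n, Rabs (cf (-l) (-l) 1 n) <= B) /\
   (forall x, -1 < x <= 0 -> forall N, Rabs (sum_f_R0 (fun n => cf (-l) (-l) 1 n * x^n) N) <= B).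
Proof.
  intros hl. destruct (exN l) as [N0 HN0].
  apply (reg13 _ N0).
  - induction n. rewrite cf0; lra. rewrite cfS by lra. apply Rmult_le_pos; auto.
    pose proof (pos_INR n). apply divnn. nra. pose proof (Rle_0_sqr (-l + INR n)); unfold Rsqr in *; lra.
  - intros n hn. rewrite cfS by lra. apply le_INR in hn.
    assert (0 <= cf (-l) (-l) 1 n).
    { clear hn. induction n. rewrite cf0; lra. rewrite cfS by lra. apply Rmult_le_pos; auto.
      pose proof (pos_INR n). apply divnn. nra. pose proof (Rle_0_sqr (-l + INR n)); unfold Rsqr in *; lra. }
    assert ((- l + INR n) * (- l + INR n) / ((1 + INR n) * (INR n + 1)) <= 1).
    { apply (Rle_trans _ (1/1)); [|lra]. apply divle. pose proof (pos_INR n); nra. lra. nra. }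
    nra.
Qed.

Lemma coef3 l : -1/2 <= l -> exists B, 0 <= B /\ (forall n, Rabs (cf (1+l) (1+l) (2+2*l) n) <= B) /\
   (forall x, -1 < x <= 0 -> forall N, Rabs (sum_f_R0 (fun n => cf (1+l) (1+l) (2+2*l) n * x^n) N) <= B).
Proof.
  intros hl. destruct (exN (l*l)) as [N0 HN0].
  assert (Hnn : forall n, 0 <= cf (1+l) (1+l) (2+2*l) n).
  { induction n. rewrite cf0; lra. rewrite cfS by lra. apply Rmult_le_pos; auto.
    pose proof (pos_INR n). apply divnn. nra. nra. }
  apply (reg13 _ N0); auto.
  - intros n hn. rewrite cfS by lra. apply le_INR in hn. pose proof (Hnn n).
    assert ((1 + l + INR n) * (1 + l + INR n) / ((2 + 2 * l + INR n) * (INR n + 1)) <= 1).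
    { apply (Rle_trans _ (1/1)); [|lra]. apply divle. pose proof (pos_INR n); nra. lra. nra. }
    nra.
Qed.

Lemma coef2 l : -1/2 <= l -> exists K, 0 <= K /\ (forall n, Rabs (cf (-l) (1+l) 1 n) <= 1 + K) /\
   (forall w, 0 <= w < 1 -> forall N, Rabs (sum_f_R0 (fun n => cf (-l) (1+l) 1 n * w^n) N) <= 1 + K * (2 + ln (1/(1-w)))).
Proof.
  intros hl. set (L := Rabs (l*(l+1))).
  apply (reg24 _ L L); try (unfold L; apply Rabs_pos).
  - apply cf0.
  - rewrite cfS, cf0 by lra. simpl INR. unfold L. right. rewrite <- (Rabs_Ropp (l*(l+1))). f_equal. field.
  - intros k hk. rewrite cfS by lra. rewrite Rabs_mult. apply Rmult_le_compat_l. apply Rabs_pos.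
    apply le_INR in hk. simpl INR in hk. set (x := INR k) in *.
    replace (x / (x + 1) * (1 + L / (x * (x + 1)))) with ((x*(x+1) + L)/((x+1)*(x+1))) by (field; lra).
    assert (E : Rabs ((- l + x) * (1 + l + x) / ((1 + x) * (x + 1))) = Rabs ((- l + x) * (1 + l + x)) / ((1 + x) * (x + 1))).
    { unfold Rdiv. rewrite Rabs_mult, Rabs_inv, (Rabs_pos_eq ((1 + x) * (x + 1))); nra. }
    rewrite E. apply divle; try nra.
    assert (Rabs ((- l + x) * (1 + l + x)) <= x * (x + 1) + L).
    { unfold L. replace ((- l + x) * (1 + l + x)) with (x*(x+1) - l*(l+1)) by ring.
      pose proof (Rabs_triang (x*(x+1)) (- (l*(l+1)))). rewrite Rabs_Ropp in H.
      rewrite (Rabs_pos_eq (x*(x+1))) in H by nra. unfold Rminus. lra. }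
    pose proof (Rabs_pos ((- l + x) * (1 + l + x))). nra.
Qed.

Lemma coef4 l : -1/2 <= l -> exists K, 0 <= K /\ (forall n, Rabs (cf (1+l) (1+l) (2+2*l) n) <= 1 + K) /\
   (forall w, 0 <= w < 1 -> forall N, Rabs (sum_f_R0 (fun n => cf (1+l) (1+l) (2+2*l) n * w^n) N) <= 1 + K * (2 + ln (1/(1-w)))).
Proof.
  intros hl. set (a := 1 + l). assert (ha : 1/2 <= a) by (unfold a; lra).
  apply (reg24 _ (a/2) (2*a*a)); try nra.
  - apply cf0.
  - unfold a. rewrite cfS, cf0 by lra. simpl INR. right. rewrite Rabs_pos_eq. field. lra.
    rewrite Rmult_1_l; apply divnn; nra.
  - intros k hk. unfold a. rewrite cfS by lra. fold a. rewrite Rabs_mult. apply Rmult_le_compat_l. apply Rabs_pos.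
    apply le_INR in hk. simpl INR in hk. set (x := INR k) in *.
    replace (x / (x + 1) * (1 + 2*a*a / (x * (x + 1)))) with ((x*(x+1) + 2*a*a)/((x+1)*(x+1))) by (field; lra).
    replace (2 + 2 * l) with (2 * a) by (unfold a; ring).
    rewrite Rabs_pos_eq by (apply divnn; nra).
    apply divle; try nra.
    assert (H : (a+x)*(a+x)*(x+1) <= (x*(x+1)+2*a*a)*(2*a+x)).
    { assert (0 <= a*a*(4*a + x - 1)) by (apply Rmult_le_pos; nra). nra. }
    apply (Rmult_le_compat_r (x+1)) in H; [|lra]. nra.
Qed.

Lemma hs_bound a b c x M K : (forall n, Rabs (cf a b c n) <= K) -> Rabs x < 1 ->
  (forall N, Rabs (sum_f_R0 (fun n => cf a b c n * x^n) N) <= M) -> Rabs (hyp_series a b c x) <= M.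
Proof. intros. unfold hyp_series. apply lim_bound; auto. apply (conv _ K); auto. Qed.

Lemma F1bound l : -1/2 <= l -> exists B, 0 <= B /\ forall s, -1 < s < 0 -> Rabs (hyp2F1 (-l) (-l) 1 s) <= B.
Proof.
  intros hl. destruct (coef1 l hl) as [B [HB [Hc Hs]]]. exists B; split; auto.
  intros s hs. unfold hyp2F1. destruct (Rle_dec s (-1)); [lra|].
  apply (hs_bound _ _ _ _ _ B); auto. unfold Rabs; destruct Rcase_abs; lra.
  intros; apply Hs; lra.
Qed.

Lemma F3bound l : -1/2 <= l -> exists B, 0 <= B /\ forall s, -1 < s < 0 -> Rabs (hyp2F1 (1+l) (1+l) (2+2*l) s) <= B.
Proof.
  intros hl. destruct (coef3 l hl) as [B [HB [Hc Hs]]]. exists B; split; auto.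
  intros s hs. unfold hyp2F1. destruct (Rle_dec s (-1)); [lra|].
  apply (hs_bound _ _ _ _ _ B); auto. unfold Rabs; destruct Rcase_abs; lra.
  intros; apply Hs; lra.
Qed.

Lemma wfacts t : 1 < t -> 0 <= t/(1+t) < 1 /\ 1/(1 - t/(1+t)) = 1 + t.
Proof.
  intros ht. split; [split|].
  - apply divnn; lra.
  - apply (Rmult_lt_reg_r (1+t)); [lra|]. field_simplify; lra.
  - field. lra.
Qed.

Lemma F2bound l : -1/2 <= l -> exists K, 0 <= K /\ forall t, 1 < t ->
  Rabs (hyp2F1 (-l) (-l) 1 (-t)) <= Rpower (1+t) l * (1 + K * (2 + ln (1+t))).
Proof.
  intros hl. destruct (coef2 l hl) as [K [HK [Hc Hs]]]. exists K; split; auto.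
  intros t ht. unfold hyp2F1. destruct (Rle_dec (-t) (-1)); [|lra].
  replace (1 - - t) with (1 + t) by ring. replace (- - l) with l by ring.
  replace (1 - - l) with (1 + l) by ring.
  replace (- t / (- t - 1)) with (t / (1 + t)) by (field; lra).
  destruct (wfacts t ht) as [Hw Hw2].
  rewrite Rabs_mult, (Rabs_pos_eq (Rpower _ _)) by (left; apply exp_pos).
  apply Rmult_le_compat_l. left; apply exp_pos.
  apply (hs_bound _ _ _ _ _ (1+K)); auto. rewrite Rabs_pos_eq; lra.
  intros N. pose proof (Hs _ Hw N) as X. rewrite Hw2 in X. exact X.
Qed.

Lemma F4bound l : -1/2 <= l -> exists K, 0 <= K /\ forall t, 1 < t ->
  Rabs (hyp2F1 (1+l) (1+l) (2+2*l) (-t)) <= Rpower (1+t) (-(1+l)) * (1 + K * (2 + ln (1+t))).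
Proof.
  intros hl. destruct (coef4 l hl) as [K [HK [Hc Hs]]]. exists K; split; auto.
  intros t ht. unfold hyp2F1. destruct (Rle_dec (-t) (-1)); [|lra].
  replace (1 - - t) with (1 + t) by ring.
  replace (2 + 2 * l - (1 + l)) with (1 + l) by ring.
  replace (- t / (- t - 1)) with (t / (1 + t)) by (field; lra).
  destruct (wfacts t ht) as [Hw Hw2].
  rewrite Rabs_mult, (Rabs_pos_eq (Rpower _ _)) by (left; apply exp_pos).
  apply Rmult_le_compat_l. left; apply exp_pos.
  apply (hs_bound _ _ _ _ _ (1+K)); auto. rewrite Rabs_pos_eq; lra.
  intros N. pose proof (Hs _ Hw N) as X. rewrite Hw2 in X. exact X.
Qed.

Lemma ltdiv c p D : 0 < D -> c * D < p -> c < p / D.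
Proof. intros hD h. apply (Rmult_lt_reg_r D); auto. unfold Rdiv. rewrite Rmult_assoc, Rinv_l; lra. Qed.
Lemma divlt p c D : 0 < D -> p < c * D -> p / D < c.
Proof. intros hD h. apply (Rmult_lt_reg_r D); auto. unfold Rdiv. rewrite Rmult_assoc, Rinv_l; lra. Qed.
Lemma div_lt_h a b z : 0 < b -> a / b < z -> a < z * b.
Proof. intros hb h. apply (Rmult_lt_compat_r b) in h; auto. unfold Rdiv in h. rewrite Rmult_assoc, Rinv_l in h; lra. Qed.
Lemma lt_div_h a b z : 0 < b -> z < a / b -> z * b < a.
Proof. intros hb h. apply (Rmult_lt_compat_r b) in h; auto. unfold Rdiv in h. rewrite Rmult_assoc, Rinv_l in h; lra. Qed.

Lemma rp_pos x y : 0 < Rpower x y.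
Proof. apply exp_pos. Qed.

Lemma e4 a b c d : exp a * exp b / exp c * exp d = exp (a + b - c + d).
Proof. unfold Rminus. rewrite !exp_plus, exp_Ropp. field. pose proof (exp_pos c); lra. Qed.
Lemma e3 a b c : exp a * (exp b / exp c) = exp (a + (b - c)).
Proof. unfold Rminus. rewrite !exp_plus, exp_Ropp. field. pose proof (exp_pos c); lra. Qed.
Lemma e3' a b c d : exp a * (exp b * exp c / exp d) = exp (a + (b + c - d)).
Proof. unfold Rminus. rewrite !exp_plus, exp_Ropp. field. pose proof (exp_pos d); lra. Qed.
Lemma e5 a b c d e : exp a * exp b / (exp c * exp d) * exp e = exp (a + b - c - d + e).
Proof. unfold Rminus. rewrite !exp_plus, !exp_Ropp. field. pose proof (exp_pos c); pose proof (exp_pos d); lra. Qed.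
Lemma e2 a b : exp a / exp b = exp (a - b).
Proof. unfold Rminus. rewrite !exp_plus, !exp_Ropp. reflexivity. Qed.

Lemma ln_quot a b c d : 0 < a -> 0 < b -> 0 < c -> 0 < d -> ln (a * b / (c * d)) = ln a + ln b - ln c - ln d.
Proof.
  intros. unfold Rdiv. rewrite ln_mult; [|nra|apply Rinv_0_lt_compat; nra].
  rewrite ln_Rinv by nra. rewrite !ln_mult by auto. ring.
Qed.

Lemma ln2_pos : 0 <= ln 2.
Proof. pose proof ln_lt_2. lra. Qed.

Lemma G_bound K t : 0 <= K -> 1 < t -> 1 + K * (2 + ln (1 + t)) <= (1 + K) * (ln t + (3 + ln 2)).
Proof.
  intros hK ht. assert (h1 : ln (1+t) <= ln 2 + ln t).
  { rewrite <- ln_mult by lra. apply ln_le; lra. }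
  assert (h2 : 0 <= ln t) by (rewrite <- ln_1; apply ln_le; lra).
  pose proof ln2_pos. nra.
Qed.

Lemma region1 l B : (forall s, -1 < s < 0 -> Rabs (hyp2F1 (-l) (-l) 1 s) <= B) ->
  forall xi eta z, 0 < eta -> eta < xi -> 2 * xi * eta / (xi + eta) < z < xi ->
  V1 l z xi eta <= B * (Rpower (z - eta) l * Rpower xi l / Rpower z (2 * l)).
Proof.
  intros HB xi eta z he hx [hz1 hz2].
  apply div_lt_h in hz1; [|lra].
  assert (hze : eta < z) by nra.
  unfold V1. rewrite Rmult_comm. apply Rmult_le_compat_r.
  - left. apply Rdiv_lt_0_compat. apply Rmult_lt_0_compat; apply rp_pos. apply rp_pos.
  - apply HB. unfold sigma1. split.
    + apply ltdiv. nra. nra.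
    + apply divlt. nra. nra.
Qed.

Lemma region2 l K : 0 <= K -> (forall t, 1 < t -> Rabs (hyp2F1 (-l) (-l) 1 (-t)) <= Rpower (1+t) l * (1 + K * (2 + ln (1+t)))) ->
  forall xi eta z, 0 < eta -> eta < xi -> eta < z < 2 * xi * eta / (xi + eta) ->
  V1 l z xi eta <= (Rpower 2 (Rabs l) * (1 + K)) * (Rpower (xi - z) l * Rpower eta l / Rpower z (2 * l))
                        * (ln ((xi - z) * eta / ((z - eta) * xi)) + (3 + ln 2)).
Proof.
  intros HK HF xi eta z he hx [hz1 hz2].
  apply lt_div_h in hz2; [|lra].
  assert (hzx : z < xi) by nra.
  set (t := (xi - z) * eta / ((z - eta) * xi)).
  assert (ht : 1 < t) by (apply ltdiv; nra).
  assert (Hs : sigma1 z xi eta = - t) by (unfold sigma1, t; field; lra).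
  unfold V1. rewrite Hs.
  set (P := Rpower (z - eta) l * Rpower xi l / Rpower z (2 * l)).
  set (P' := Rpower (xi - z) l * Rpower eta l / Rpower z (2 * l)).
  set (R := Rpower (1 + t) l). set (G := 1 + K * (2 + ln (1 + t))).
  assert (HP : 0 <= P) by (left; apply Rdiv_lt_0_compat; [apply Rmult_lt_0_compat; apply rp_pos| apply rp_pos]).
  assert (HP' : 0 <= P') by (left; apply Rdiv_lt_0_compat; [apply Rmult_lt_0_compat; apply rp_pos| apply rp_pos]).
  assert (HG : 0 <= G). { unfold G. assert (0 <= ln (1+t)) by (rewrite <- ln_1; apply ln_le; lra). nra. }
  assert (Hlt : ln t = ln (xi - z) + ln eta - ln (z - eta) - ln xi) by (unfold t; apply ln_quot; lra).
  assert (HPR : P * R <= Rpower 2 (Rabs l) * P').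
  { unfold P, P', R, Rpower. rewrite e4, e3'. apply exp_le.
    assert (h1 : ln (1+t) <= ln 2 + ln t) by (rewrite <- ln_mult by lra; apply ln_le; lra).
    assert (h0 : ln t <= ln (1+t)) by (apply ln_le; lra).
    pose proof ln2_pos.
    assert (l * (ln (1+t) - ln t) <= Rabs l * ln 2).
    { destruct (Rle_dec 0 l). rewrite Rabs_pos_eq by lra. nra. rewrite Rabs_left by lra. nra. }
    rewrite Hlt in *. lra. }
  pose proof (HF t ht) as HFt. fold R G in HFt.
  apply (Rle_trans _ (P * (R * G))). apply Rmult_le_compat_l; auto.
  rewrite <- Rmult_assoc.
  apply (Rle_trans _ (Rpower 2 (Rabs l) * P' * G)). apply Rmult_le_compat_r; auto.
  pose proof (G_bound K t HK ht). fold G in H.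
  pose proof (rp_pos 2 (Rabs l)).
  apply (Rle_trans _ (Rpower 2 (Rabs l) * P' * ((1 + K) * (ln t + (3 + ln 2))))).
  apply Rmult_le_compat_l; auto. nra. right; ring.
Qed.

Lemma region3 l B : (forall s, -1 < s < 0 -> Rabs (hyp2F1 (1+l) (1+l) (2+2*l) s) <= B) ->
  forall xi eta z, 0 < eta -> eta < xi -> 0 < z < xi * eta / (2 * xi - eta) ->
  V2 l z xi eta <= (Rabs (Rabs (sin (PI * l)) * (Gamma (1 + l)) ^ 2 / (PI * Gamma (2 + 2 * l))) * B)
     * (Rpower (xi - eta) (1 + 2 * l) * z / (Rpower xi (1 + l) * Rpower (eta - z) (1 + l))).
Proof.
  intros HB xi eta z he hx [hz1 hz2].
  apply lt_div_h in hz2; [|lra].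
  assert (hze : z < eta) by nra.
  unfold V2. replace (l + 1) with (1 + l) by ring.
  set (K0 := Rabs (sin (PI * l)) * (Gamma (1 + l)) ^ 2 / (PI * Gamma (2 + 2 * l))).
  set (Q := Rpower (xi - eta) (1 + 2 * l) * z / (Rpower xi (1 + l) * Rpower (eta - z) (1 + l))).
  set (F := Rabs (hyp2F1 (1 + l) (1 + l) (2 + 2 * l) (sigma2 z xi eta))).
  assert (HQ : 0 <= Q).
  { left. apply Rdiv_lt_0_compat. apply Rmult_lt_0_compat; [apply rp_pos|lra]. apply Rmult_lt_0_compat; apply rp_pos. }
  assert (HF : F <= B).
  { apply HB. unfold sigma2. split.
    + apply ltdiv. nra. nra.
    + apply divlt. nra. nra. }
  assert (HF0 : 0 <= F) by apply Rabs_pos.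
  pose proof (Rle_abs K0).
  rewrite Rmult_assoc.
  apply (Rle_trans _ (Rabs K0 * (Q * F))). apply Rmult_le_compat_r. nra. auto.
  pose proof (Rabs_pos K0).
  apply (Rle_trans _ (Rabs K0 * (Q * B))). apply Rmult_le_compat_l; auto. apply Rmult_le_compat_l; auto.
  right; ring.
Qed.

Lemma region4 l K : -1/2 <= l -> 0 <= K -> (forall t, 1 < t -> Rabs (hyp2F1 (1+l) (1+l) (2+2*l) (-t)) <= Rpower (1+t) (-(1+l)) * (1 + K * (2 + ln (1+t)))) ->
  forall xi eta z, 0 < eta -> eta < xi -> xi * eta / (2 * xi - eta) < z < eta ->
  V2 l z xi eta <= (Rabs (Rabs (sin (PI * l)) * (Gamma (1 + l)) ^ 2 / (PI * Gamma (2 + 2 * l))) * (1 + K))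
     * (Rpower (xi - eta) l / Rpower z l) * (ln (z * (xi - eta) / (xi * (eta - z))) + (3 + ln 2)).
Proof.
  intros hl HK HFb xi eta z he hx [hz1 hz2].
  apply div_lt_h in hz1; [|lra].
  assert (hz0 : 0 < z) by nra.
  set (t := z * (xi - eta) / (xi * (eta - z))).
  assert (ht : 1 < t) by (apply ltdiv; nra).
  assert (Hs : sigma2 z xi eta = - t) by (unfold sigma2, t; field; lra).
  assert (Hlt : ln t = ln z + ln (xi - eta) - ln xi - ln (eta - z)) by (unfold t; apply ln_quot; lra).
  unfold V2. rewrite Hs.
  set (K0 := Rabs (sin (PI * l)) * (Gamma (1 + l)) ^ 2 / (PI * Gamma (2 + 2 * l))).
  set (Q := Rpower (xi - eta) (1 + 2 * l) * z / (Rpower xi (l + 1) * Rpower (eta - z) (l + 1))).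
  set (F := Rabs (hyp2F1 (1 + l) (1 + l) (2 + 2 * l) (-t))).
  set (R := Rpower (1 + t) (-(1+l))). set (G := 1 + K * (2 + ln (1 + t))).
  set (Y := Rpower (xi - eta) l / Rpower z l).
  assert (HQ : 0 <= Q).
  { left. apply Rdiv_lt_0_compat. apply Rmult_lt_0_compat; [apply rp_pos|lra]. apply Rmult_lt_0_compat; apply rp_pos. }
  assert (HY : 0 <= Y) by (left; apply Rdiv_lt_0_compat; apply rp_pos).
  assert (HG : 0 <= G). { unfold G. assert (0 <= ln (1+t)) by (rewrite <- ln_1; apply ln_le; lra). nra. }
  assert (HF : F <= R * G) by apply HFb, ht.
  assert (HF0 : 0 <= F) by apply Rabs_pos.
  assert (HQR : Q * R <= Y).
  { unfold Q, R, Y, Rpower. rewrite <- (exp_ln z) at 1 by lra. rewrite e5, e2. apply exp_le.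
    assert (h0 : ln t <= ln (1+t)) by (apply ln_le; lra).
    assert (0 <= (1 + l) * (ln (1+t) - ln t)) by (apply Rmult_le_pos; lra).
    rewrite Hlt in *. nra. }
  pose proof (Rle_abs K0). pose proof (Rabs_pos K0).
  rewrite Rmult_assoc.
  apply (Rle_trans _ (Rabs K0 * (Q * F))). apply Rmult_le_compat_r. nra. auto.
  apply (Rle_trans _ (Rabs K0 * (Y * G))). apply Rmult_le_compat_l; auto.
  apply (Rle_trans _ (Q * (R * G))). apply Rmult_le_compat_l; auto.
  rewrite <- Rmult_assoc. apply Rmult_le_compat_r; auto.
  pose proof (G_bound K t HK ht). fold G in H1.
  apply (Rle_trans _ (Rabs K0 * (Y * ((1 + K) * (ln t + (3 + ln 2)))))).
  apply Rmult_le_compat_l; auto. apply Rmult_le_compat_l; auto.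
  right; ring.
Qed.

Theorem lemmaA1 (l : R) (hl : -1/2 <= l) :
  exists C1 C2 C3 C4 C5 C6 : R,
  forall xi eta : R, 0 < eta -> eta < xi ->
    (forall z, 2 * xi * eta / (xi + eta) < z < xi ->
       V1 l z xi eta <= C1 * (Rpower (z - eta) l * Rpower xi l / Rpower z (2 * l))) /\
    (forall z, eta < z < 2 * xi * eta / (xi + eta) ->
       V1 l z xi eta <= C2 * (Rpower (xi - z) l * Rpower eta l / Rpower z (2 * l))
                        * (ln ((xi - z) * eta / ((z - eta) * xi)) + C3)) /\
    (forall z, 0 < z < xi * eta / (2 * xi - eta) ->
       V2 l z xi eta <= C4 * (Rpower (xi - eta) (1 + 2 * l) * z
                              / (Rpower xi (1 + l) * Rpower (eta - z) (1 + l)))) /\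
    (forall z, xi * eta / (2 * xi - eta) < z < eta ->
       V2 l z xi eta <= C5 * (Rpower (xi - eta) l / Rpower z l)
                        * (ln (z * (xi - eta) / (xi * (eta - z))) + C6)).
Proof.
  destruct (F1bound l hl) as [B1 [_ H1]].
  destruct (F2bound l hl) as [K2 [HK2 H2]].
  destruct (F3bound l hl) as [B3 [_ H3]].
  destruct (F4bound l hl) as [K4 [HK4 H4]].
  set (K0 := Rabs (sin (PI * l)) * (Gamma (1 + l)) ^ 2 / (PI * Gamma (2 + 2 * l))).
  exists B1, (Rpower 2 (Rabs l) * (1 + K2)), (3 + ln 2), (Rabs K0 * B3), (Rabs K0 * (1 + K4)), (3 + ln 2).
  intros xi eta he hx. split; [|split; [|split]].
  - intros z hz. apply (region1 l B1 H1); auto.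
  - intros z hz. apply (region2 l K2 HK2 H2); auto.
  - intros z hz. apply (region3 l B3 H3); auto.
  - intros z hz. apply (region4 l K4 hl HK4 H4); auto.
Qed.
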